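(* Let $\mathcal{S}$ be a state space, $\mathcal{A}$ a finite action space, $\rho$ a distribution on $\mathcal{S}$, $\pi_{\mathrm{ref}}$ a policy, $R>0$, and $r^*:\mathcal{S}\times\mathcal{A}\to[0,R]$. Let $\pi$ be any policy, $r:\mathcal{S}\times\mathcal{A}\to[-R,R]$ any reward function, and $\tilde\pi$ any policy with $\tilde\pi(a|s)>0$ for all $(s,a)$. Then $$\mathbb{E}_{s\sim\rho,a\sim\pi(\cdot|s),\tilde a\sim\pi_{\mathrm{ref}}(\cdot|s)}\Big[\big|\big(r^*(s,a)-r^*(s,\tilde a)\big)-\big(r(s,a)-r(s,\tilde a)\big)\big|\Big]\le8\sqrt2\,e^{2R}\sqrt{\mathrm{Cov}^{\pi|\tilde\pi}\cdot\mathbb{E}_{s\sim\rho,a\sim\tilde\pi(\cdot|s),\tilde a\sim\pi_{\mathrm{ref}}(\cdot|s)}\big[\mathbb{H}^2\big(\mathbb{P}_r(\cdot|s,a,\tilde a)\|\mathbb{P}_{r^*}(\cdot|s,a,\tilde a)\big)\big]}.$$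
   Context: Bradley–Terry model: $\mathbb{P}_r(y=1|s,a,\tilde a)=\sigma(r(s,a)-r(s,\tilde a))$, $\mathbb{P}_r(y=0|s,a,\tilde a)=1-\sigma(r(s,a)-r(s,\tilde a))$, $\sigma(x)=1/(1+e^{-x})$. $\mathrm{Cov}^{\pi|\tilde\pi}:=\mathbb{E}_{s\sim\rho,a\sim\pi(\cdot|s)}[\pi(a|s)/\tilde\pi(a|s)]$. Squared Hellinger distance between distributions on $\{0,1\}$: $\mathbb{H}^2(P\|Q)=\sum_{y\in\{0,1\}}(\sqrt{P(y)}-\sqrt{Q(y)})^2$. *)

(* Defs.v *)
From HB Require Import structures.
From mathcomp Require Import all_boot all_order all_algebra.
From mathcomp Require Import all_classical all_reals all_analysis.
Set Implicit Arguments. Unset Strict Implicit. Unset Printing Implicit Defensive.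
Import Order.TTheory GRing.Theory Num.Theory.
Local Open Scope ring_scope.

(* A policy is a Markov kernel
   S -> distributions on A, represented by its probability mass function
   pi s a = pi(a|s), measurable in s for each action a. *)

Definition is_policy (d : measure_display) (S : measurableType d)
  (A : finType) (R : realType) (pi : S -> A -> R) : Prop :=
  [/\ (forall s a, 0 <= pi s a),
      (forall s, \sum_(a : A) pi s a = 1) &
      (forall a, measurable_fun setT (fun s => pi s a))].

Definition sigmoid (R : realType) (x : R) : R := 1 / (1 + expR (- x)).

(* Bradley--Terry model: P_r(y | s, a, a'), with y = true standing for y = 1 *)
Definition PBT (S A : Type) (R : realType) (r : S -> A -> R)
  (s : S) (a a' : A) (y : bool) : R :=
  if y then sigmoid (r s a - r s a') else 1 - sigmoid (r s a - r s a').

Definition hellinger2 (R : realType) (P Q : bool -> R) : R :=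
  \sum_(y : bool) (Num.sqrt (P y) - Num.sqrt (Q y)) ^+ 2.

Definition Cov (d : measure_display) (S : measurableType d) (A : finType)
  (R : realType) (rho : probability S R) (pi pi' : S -> A -> R) : \bar R :=
  (\int[rho]_s (\sum_(a : A) pi s a * (pi s a / pi' s a))%:E)%E.

(* Main.v *)
Require Import Defs.
From HB Require Import structures.
From mathcomp Require Import all_boot all_order all_algebra.
From mathcomp Require Import all_classical all_reals all_analysis.
From mathcomp Require Import measurable_realfun.
From mathcomp Require Import ring lra.
Import Order.TTheory GRing.Theory Num.Theory.
Local Open Scope ring_scope.
Lemma amgm_opt (R : realType) (F G H K : R) : 0 <= G -> 0 <= H -> 0 < K ->
  (forall t, 0 < t -> F <= K / 2 * (t * G + H / t)) ->
  F <= K * Num.sqrt (G * H).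
Proof.
move=> G0 H0 K0 hyp.
rewrite sqrtrM //.
set a := Num.sqrt G; set b := Num.sqrt H.
have a0 : 0 <= a by exact: sqrtr_ge0.
have b0 : 0 <= b by exact: sqrtr_ge0.
have Ga : G = a ^+ 2 by rewrite sqr_sqrtr.
have Hb : H = b ^+ 2 by rewrite sqr_sqrtr.
apply/ler_addgt0Pr => e e0.
pose eps := e / (K * (a + b) + 1).
have D0 : 0 < K * (a + b) + 1.
  have : 0 <= K * (a + b) by apply: mulr_ge0; lra.
  lra.
have eps0 : 0 < eps by apply: divr_gt0.
have epsE : eps * (K * (a + b) + 1) = e by rewrite /eps divfK // gt_eqF.
clearbody eps.
have ae0 : 0 < a + eps by lra.
have be0 : 0 < b + eps by lra.
have := hyp ((b + eps) / (a + eps)) (divr_gt0 be0 ae0).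
move=> h; apply: le_trans h _.
rewrite Ga Hb.
have h1 : (b + eps) / (a + eps) * a ^+ 2 <= (b + eps) * a.
  rewrite mulrAC -mulrA ler_pM2l // ler_pdivrMr //.
  have : 0 <= a * eps by apply: mulr_ge0; lra.
  rewrite expr2 mulrDr; lra.
have h2 : b ^+ 2 / ((b + eps) / (a + eps)) <= b * (a + eps).
  rewrite invf_div mulrA ler_pdivrMr //.
  have : 0 <= b * (a + eps) * eps by apply: mulr_ge0; [apply: mulr_ge0|]; lra.
  rewrite expr2. nra.
have hK : 0 < K / 2 by lra.
apply: le_trans (_ : K / 2 * ((b + eps) * a + b * (a + eps)) <= _).
  rewrite ler_pM2l //; lra.
have : 0 <= eps * (K * (a + b)) by apply: mulr_ge0; [lra| apply: mulr_ge0; lra].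
nra.
Qed.

Lemma hel_bound (R : realType) (p q : R) : 0 <= p <= 1 -> 0 <= q <= 1 ->
  (p - q) ^+ 2 <= 2 * ((Num.sqrt p - Num.sqrt q) ^+ 2 +
                       (Num.sqrt (1 - p) - Num.sqrt (1 - q)) ^+ 2).
Proof.
move=> /andP[p0 p1] /andP[q0 q1].
have A0 := sqrtr_ge0 p; have B0 := sqrtr_ge0 q.
have C0 := sqrtr_ge0 (1 - p); have D0 := sqrtr_ge0 (1 - q).
have hA : Num.sqrt p ^+ 2 = p by rewrite sqr_sqrtr.
have hB : Num.sqrt q ^+ 2 = q by rewrite sqr_sqrtr.
have hC : Num.sqrt (1 - p) ^+ 2 = 1 - p by rewrite sqr_sqrtr // subr_ge0.
have hD : Num.sqrt (1 - q) ^+ 2 = 1 - q by rewrite sqr_sqrtr // subr_ge0.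
move: A0 B0 C0 D0 hA hB hC hD.
set A := Num.sqrt p; set B := Num.sqrt q; set C := Num.sqrt (1 - p);
  set D := Num.sqrt (1 - q).
move=> A0 B0 C0 D0 hA hB hC hD.
have e1 : (p - q) ^+ 2 = (A - B) ^+ 2 * (A + B) ^+ 2.
  by rewrite -hA -hB; ring.
have e2 : (p - q) ^+ 2 = (C - D) ^+ 2 * (C + D) ^+ 2.
  have -> : p - q = (1 - q) - (1 - p) by ring.
  by rewrite -hC -hD; ring.
have s1 : (A + B) ^+ 2 <= 4.
  have : (A + B) ^+ 2 <= 2 * (A ^+ 2 + B ^+ 2).
    have : 0 <= (A - B) ^+ 2 by exact: sqr_ge0.
    lra.
  lra.
have s2 : (C + D) ^+ 2 <= 4.
  have : (C + D) ^+ 2 <= 2 * (C ^+ 2 + D ^+ 2).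
    have : 0 <= (C - D) ^+ 2 by exact: sqr_ge0.
    lra.
  lra.
have t1 : (p - q) ^+ 2 <= 4 * (A - B) ^+ 2.
  rewrite e1 mulrC; apply: ler_wpM2r => //; exact: sqr_ge0.
have t2 : (p - q) ^+ 2 <= 4 * (C - D) ^+ 2.
  rewrite e2 mulrC; apply: ler_wpM2r => //; exact: sqr_ge0.
lra.
Qed.

Lemma sig_lip (R : realType) (x y : R) :
  x - y <= (sigmoid x - sigmoid y) * (2 + expR (- y) + expR x).
Proof.
rewrite /sigmoid.
have ex : expR x = (expR (- x))^-1 by rewrite expRN invrK.
rewrite ex.
have u0 := expR_gt0 (- x); have v0 := expR_gt0 (- y).
move: u0 v0; set u := expR (- x); set v := expR (- y) => u0 v0.
pose al := (v - u) / (1 + u).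
pose be := v * (1 + u) / (u * (1 + v)) - 1.
have u1 : 1 + u != 0 by rewrite gt_eqF //; lra.
have v1 : 1 + v != 0 by rewrite gt_eqF //; lra.
have un : u != 0 by rewrite gt_eqF.
have E : expR (x - y) = (1 + al) * (1 + be).
  rewrite expRD ex -/u -/v /al /be. field. by rewrite u1 v1 un.
have pa : 0 <= 1 + al.
  have -> : 1 + al = (1 + v) / (1 + u) by rewrite /al; field.
  apply: divr_ge0; lra.
have pb : 0 <= 1 + be.
  have -> : 1 + be = v * (1 + u) / (u * (1 + v)) by rewrite /be; ring.
  apply: divr_ge0; apply: mulr_ge0; lra.
have : expR (x - y) <= expR (al + be).
  rewrite E expRD; apply: ler_pM => //; exact: expR_ge1Dx.
rewrite ler_expR => h; apply: (le_trans h).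
rewrite le_eqVlt; apply/orP; left; apply/eqP.
rewrite /al /be; field. by rewrite u1 v1 un.
Qed.

Lemma sig_half (R : realType) (Rb x y : R) : 0 <= Rb ->
  - (2 * Rb) <= x <= 2 * Rb -> - (2 * Rb) <= y <= 2 * Rb -> y <= x ->
  x - y <= 4 * expR (2 * Rb) * (sigmoid x - sigmoid y).
Proof.
move=> R0 /andP[x1 x2] /andP[y1 y2] yx.
have h := @sig_lip R x y.
have ev : expR (- y) <= expR (2 * Rb) by rewrite ler_expR; lra.
have ex : expR x <= expR (2 * Rb) by rewrite ler_expR; lra.
have e1 : 1 <= expR (2 * Rb).
  have := expR_ge1Dx (2 * Rb); lra.
have ev0 := expR_gt0 (- y); have ex0 := expR_gt0 x.
have M0 : 0 < 2 + expR (- y) + expR x by lra.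
have d0 : 0 <= sigmoid x - sigmoid y.
  have : 0 <= (sigmoid x - sigmoid y) * (2 + expR (- y) + expR x) by lra.
  by rewrite pmulr_lge0.
apply: (le_trans h); rewrite mulrC; apply: ler_wpM2r => //; lra.
Qed.

Lemma sig_sq (R : realType) (Rb x y : R) : 0 <= Rb ->
  - (2 * Rb) <= x <= 2 * Rb -> - (2 * Rb) <= y <= 2 * Rb ->
  (x - y) ^+ 2 <= (4 * expR (2 * Rb)) ^+ 2 * (sigmoid x - sigmoid y) ^+ 2.
Proof.
move=> R0 hx hy.
rewrite -exprMn.
have [yx|xy] := leP y x.
  have h := @sig_half R Rb x y R0 hx hy yx.
  rewrite ler_pXn2r // ?nnegrE; lra.
have h := @sig_half R Rb y x R0 hy hx (ltW xy).
have -> : (x - y) ^+ 2 = (y - x) ^+ 2 by ring.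
have -> : (4 * expR (2 * Rb) * (sigmoid x - sigmoid y)) ^+ 2
  = (4 * expR (2 * Rb) * (sigmoid y - sigmoid x)) ^+ 2 by ring.
rewrite ler_pXn2r // ?nnegrE; lra.
Qed.

Lemma term_bound (R : realType) (p q w t K H D : R) :
  0 <= p -> 0 <= q -> 0 < w -> 0 < t -> 0 < K -> D ^+ 2 <= K ^+ 2 * H ->
  p * q * `|D| <= K / 2 * (t * (q * (p * (p / w))) + w * q * H / t).
Proof.
move=> p0 q0 w0 t0 K0 hD.
pose c := t * K / w.
have c0 : 0 < c by rewrite /c; apply: divr_gt0 => //; apply: mulr_gt0.
have a0 : 0 <= `|D| by [].
have aD : `|D| ^+ 2 = D ^+ 2 by rewrite real_normK // num_real.
have am : 2 * (p * `|D|) <= c * p ^+ 2 + `|D| ^+ 2 / c.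
  have e : c * p ^+ 2 + `|D| ^+ 2 / c - 2 * (p * `|D|) = (c * p - `|D|) ^+ 2 / c.
    by field; rewrite gt_eqF.
  have : 0 <= (c * p - `|D|) ^+ 2 / c by apply: divr_ge0; [exact: sqr_ge0|lra].
  rewrite -e; lra.
have b : `|D| ^+ 2 / c <= K ^+ 2 * H / c.
  by rewrite ler_pM2r ?invr_gt0 // aD.
have e2 : K / 2 * (t * (q * (p * (p / w))) + w * q * H / t)
   = q * ((c * p ^+ 2 + K ^+ 2 * H / c) / 2).
  rewrite /c; field; rewrite !gt_eqF //.
rewrite e2 mulrAC mulrC; apply: ler_wpM2l => //.
lra.
Qed.

Lemma msig (R : realType) : measurable_fun [set: R] (@sigmoid R).
Proof.
have -> : @sigmoid R = fun x => expR (- ln (1 + expR (- x))).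
  apply/funext => x; rewrite /sigmoid [in RHS]expRN lnK ?div1r // posrE.
  have := expR_gt0 (- x); lra.
apply: measurableT_comp; first exact: measurable_expR.
apply: measurable_funN.
apply: measurableT_comp; first exact: measurable_ln.
apply: measurable_funD; first exact: measurable_cst.
apply: measurableT_comp; first exact: measurable_expR.
exact: measurable_funN.
Qed.

Lemma msqrt (R : realType) : measurable_fun [set: R] (@Num.sqrt R).
Proof. apply: continuous_measurable_fun; exact: sqrt_continuous. Qed.

Lemma mdiv d (S : measurableType d) (R : realType) (f g : S -> R) :
  measurable_fun setT f -> measurable_fun setT g -> (forall s, 0 < g s) ->
  measurable_fun setT (fun s => f s / g s).
Proof.
move=> mf mg gp.
have -> : (fun s => f s / g s) = (fun s => f s * expR (- ln (g s))).
  by apply/funext => s; rewrite expRN lnK // posrE.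
apply: measurable_funM => //.
apply: measurableT_comp; first exact: measurable_expR.
apply: measurable_funN.
apply: measurableT_comp => //; exact: measurable_ln.
Qed.

Lemma sum_rearr (R : realType) (A : finType) (q X : A -> R) (Y : A -> A -> R) (c t : R) :
  \sum_(a : A) \sum_(a' : A) c * (t * (q a' * X a) + Y a a' / t) =
  c * (t * \sum_(a : A) ((\sum_(a' : A) q a') * X a) + (\sum_(a : A) \sum_(a' : A) Y a a') / t).
Proof.
rewrite mulrDr !mulr_sumr mulr_suml !mulr_sumr -big_split /=.
apply: eq_bigr => a _.
rewrite mulr_suml !mulr_sumr mulr_suml !mulr_sumr -big_split /=.
apply: eq_bigr => a' _; ring.
Qed.

Lemma sig01 (R : realType) (x : R) : 0 <= sigmoid x <= 1.
Proof.
rewrite /sigmoid; have e := expR_gt0 (- x).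
apply/andP; split; first by apply: divr_ge0; lra.
rewrite ler_pdivrMr; lra.
Qed.

Lemma hel_le2 (R : realType) (p q : R) : 0 <= p <= 1 -> 0 <= q <= 1 ->
  (Num.sqrt p - Num.sqrt q) ^+ 2 + (Num.sqrt (1 - p) - Num.sqrt (1 - q)) ^+ 2 <= 2.
Proof.
move=> /andP[p0 p1] /andP[q0 q1].
have A0 := sqrtr_ge0 p; have B0 := sqrtr_ge0 q.
have C0 := sqrtr_ge0 (1 - p); have D0 := sqrtr_ge0 (1 - q).
have hA : Num.sqrt p ^+ 2 = p by rewrite sqr_sqrtr.
have hB : Num.sqrt q ^+ 2 = q by rewrite sqr_sqrtr.
have hC : Num.sqrt (1 - p) ^+ 2 = 1 - p by rewrite sqr_sqrtr // subr_ge0.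
have hD : Num.sqrt (1 - q) ^+ 2 = 1 - q by rewrite sqr_sqrtr // subr_ge0.
move: A0 B0 C0 D0 hA hB hC hD.
set A := Num.sqrt p; set B := Num.sqrt q; set C := Num.sqrt (1 - p);
  set D := Num.sqrt (1 - q).
move=> A0 B0 C0 D0 hA hB hC hD.
have : 0 <= A * B by exact: mulr_ge0.
have : 0 <= C * D by exact: mulr_ge0.
have e : (A - B) ^+ 2 + (C - D) ^+ 2 = A ^+ 2 + B ^+ 2 + C ^+ 2 + D ^+ 2 - 2 * (A * B) - 2 * (C * D) by ring.
rewrite e hA hB hC hD; lra.
Qed.

Theorem lemmaH3 (R : realType) (d : measure_display) (S : measurableType d)
  (A : finType) (rho : probability S R) (piref : S -> A -> R) (Rb : R)
  (rstar : S -> A -> R) (pi : S -> A -> R) (r : S -> A -> R)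
  (pit : S -> A -> R) :
  is_policy piref -> 0 < Rb ->
  (forall s a, 0 <= rstar s a <= Rb) ->
  (forall a, measurable_fun setT (fun s => rstar s a)) ->
  is_policy pi ->
  (forall s a, - Rb <= r s a <= Rb) ->
  (forall a, measurable_fun setT (fun s => r s a)) ->
  is_policy pit -> (forall s a, 0 < pit s a) ->
  (\int[rho]_s (\sum_(a : A) \sum_(a' : A) pi s a * piref s a' *
      `| (rstar s a - rstar s a') - (r s a - r s a') |)%:E
   <= (8 * Num.sqrt 2 * expR (2 * Rb))%:E *
      sqrte (Cov rho pi pit *
        \int[rho]_s (\sum_(a : A) \sum_(a' : A) pit s a * piref s a' *
          hellinger2 (PBT r s a a') (PBT rstar s a a'))%:E))%E.
Proof.
move=> [pr0 pr1 prm] R0 rsb rsm [pi0 pi1 pim] rb rm [pt0 pt1 ptm] ptpos.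
pose K := 8 * Num.sqrt 2 * expR (2 * Rb).
pose Hl s a a' := hellinger2 (PBT r s a a') (PBT rstar s a a').
pose f s := \sum_(a : A) \sum_(a' : A) pi s a * piref s a' *
      `| (rstar s a - rstar s a') - (r s a - r s a') |.
pose g s := \sum_(a : A) pi s a * (pi s a / pit s a).
pose h s := \sum_(a : A) \sum_(a' : A) pit s a * piref s a' * Hl s a a'.
change (\int[rho]_s (f s)%:E <= K%:E *
  sqrte (\int[rho]_s (g s)%:E * \int[rho]_s (h s)%:E))%E.
have s2 : Num.sqrt 2 ^+ 2 = 2 :> R by rewrite sqr_sqrtr.
have Kpos : 0 < K.
  have sq0 : 0 < Num.sqrt 2 :> R by rewrite sqrtr_gt0.
  rewrite /K; apply: mulr_gt0 (expR_gt0 _); apply: mulr_gt0 => //.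
have HlE : forall s a a', Hl s a a' =
   (Num.sqrt (sigmoid (r s a - r s a')) - Num.sqrt (sigmoid (rstar s a - rstar s a'))) ^+ 2 +
   (Num.sqrt (1 - sigmoid (r s a - r s a')) - Num.sqrt (1 - sigmoid (rstar s a - rstar s a'))) ^+ 2.
  by move=> s a a'; rewrite /Hl /hellinger2 big_bool /PBT.
have Hl0 : forall s a a', 0 <= Hl s a a'.
  by move=> s a a'; rewrite HlE; apply: addr_ge0; exact: sqr_ge0.
have Hl2 : forall s a a', Hl s a a' <= 2.
  by move=> s a a'; rewrite HlE; apply: hel_le2; exact: sig01.
have hD : forall s a a', ((rstar s a - rstar s a') - (r s a - r s a')) ^+ 2
    <= K ^+ 2 * Hl s a a'.
  move=> s a a'.
  have hx : - (2 * Rb) <= r s a - r s a' <= 2 * Rb.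
    move: (rb s a) (rb s a') => /andP[h1 h2] /andP[h3 h4]; apply/andP; split; lra.
  have hy : - (2 * Rb) <= rstar s a - rstar s a' <= 2 * Rb.
    move: (rsb s a) (rsb s a') => /andP[h1 h2] /andP[h3 h4]; apply/andP; split; lra.
  have h1 := @sig_sq R Rb _ _ (ltW R0) hx hy.
  have h2 := @hel_bound R _ _ (@sig01 R (r s a - r s a')) (@sig01 R (rstar s a - rstar s a')).
  rewrite HlE.
  move: h1 h2.
  set x := r s a - r s a'; set y := rstar s a - rstar s a'.
  set E := expR (2 * Rb).
  set Hv := (_ ^+ 2 + _ ^+ 2).
  set Dv := (sigmoid x - sigmoid y) ^+ 2.
  move=> h1 h2.
  have e : (y - x) ^+ 2 = (x - y) ^+ 2 by ring.
  have KE : K ^+ 2 = 8 * (4 * E) ^+ 2 by rewrite /K !exprMn s2 -/E; ring.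
  rewrite e KE; apply: (le_trans h1).
  have Z0 : 0 <= (4 * E) ^+ 2 by exact: sqr_ge0.
  have Hv0 : 0 <= Hv by rewrite /Hv; apply: addr_ge0; exact: sqr_ge0.
  have : (4 * E) ^+ 2 * Dv <= (4 * E) ^+ 2 * (2 * Hv) by apply: ler_wpM2l.
  have : 0 <= (4 * E) ^+ 2 * Hv by apply: mulr_ge0.
  lra.
have ptw : forall s t, 0 < t -> f s <= K / 2 * (t * g s + h s / t).
  move=> s t t0.
  have -> : K / 2 * (t * g s + h s / t) = \sum_(a : A) \sum_(a' : A)
      K / 2 * (t * (piref s a' * (pi s a * (pi s a / pit s a))) +
               pit s a * piref s a' * Hl s a a' / t).
    rewrite (@sum_rearr R A (piref s) (fun a => pi s a * (pi s a / pit s a))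
               (fun a a' => pit s a * piref s a' * Hl s a a')).
    rewrite pr1 /g /h; congr (_ * (_ * _ + _)).
    by apply: eq_bigr => a _; rewrite mul1r.
  rewrite /f; apply: ler_sum => a _; apply: ler_sum => a' _.
  by apply: term_bound.
have f0 : forall s, 0 <= f s.
  move=> s; apply: sumr_ge0 => a _; apply: sumr_ge0 => a' _.
  by apply: mulr_ge0 => //; apply: mulr_ge0.
have g0 : forall s, 0 <= g s.
  move=> s; apply: sumr_ge0 => a _; apply: mulr_ge0 => //.
  by apply: divr_ge0 => //; exact: ltW.
have h0 : forall s, 0 <= h s.
  move=> s; apply: sumr_ge0 => a _; apply: sumr_ge0 => a' _.
  by apply: mulr_ge0 => //; apply: mulr_ge0.
have hle2 : forall s, h s <= 2.
  move=> s; apply: le_trans (_ : \sum_(a : A) \sum_(a' : A) pit s a * piref s a' * 2 <= 2).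
    apply: ler_sum => a _; apply: ler_sum => a' _.
    by apply: ler_wpM2l => //; apply: mulr_ge0.
  have e : forall a, \sum_(a' : A) pit s a * piref s a' * 2 = pit s a * 2.
    by move=> a; rewrite -big_distrl /= -big_distrr /= pr1 mulr1.
  rewrite (eq_bigr _ (fun a _ => e a)) -big_distrl /= pt1 mul1r.
  by [].
have mHl : forall a a', measurable_fun setT (fun s => Hl s a a').
  move=> a a'.
  rewrite (_ : (fun s => Hl s a a') = (fun s =>
   (Num.sqrt (sigmoid (r s a - r s a')) - Num.sqrt (sigmoid (rstar s a - rstar s a'))) ^+ 2 +
   (Num.sqrt (1 - sigmoid (r s a - r s a')) - Num.sqrt (1 - sigmoid (rstar s a - rstar s a'))) ^+ 2)); last first.
    by apply/funext => s; rewrite HlE.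
  have ms : forall (q : S -> A -> R), (forall a, measurable_fun setT (fun s => q s a)) ->
      measurable_fun setT (fun s => sigmoid (q s a - q s a')).
    move=> q mq; apply: measurableT_comp; first exact: msig.
    exact: measurable_funB.
  have ms1 : forall (q : S -> A -> R), (forall a, measurable_fun setT (fun s => q s a)) ->
      measurable_fun setT (fun s => 1 - sigmoid (q s a - q s a')).
    move=> q mq; apply: measurable_funB; first exact: measurable_cst.
    exact: ms.
  apply: measurable_funD; apply: measurable_funX; apply: measurable_funB;
    (apply: measurableT_comp; first exact: msqrt).
  - exact: ms.
  - exact: ms.
  - exact: ms1.
  - exact: ms1.
have mf : measurable_fun setT f.
  apply: measurable_sum => a; apply: measurable_sum => a'.
  apply: measurable_funM; first exact: measurable_funM.
  apply: measurableT_comp; first exact: normr_measurable.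
  by apply: measurable_funB; apply: measurable_funB.
have mg : measurable_fun setT g.
  apply: measurable_sum => a; apply: measurable_funM => //.
  by apply: mdiv => // s; exact: ptpos.
have mh : measurable_fun setT h.
  apply: measurable_sum => a; apply: measurable_sum => a'.
  apply: measurable_funM; first exact: measurable_funM.
  exact: mHl.
have mfE : measurable_fun setT (fun s => (f s)%:E) by exact/measurable_EFinP.
have mgE : measurable_fun setT (fun s => (g s)%:E) by exact/measurable_EFinP.
have mhE : measurable_fun setT (fun s => (h s)%:E) by exact/measurable_EFinP.
have Fge0 : (0 <= \int[rho]_s (f s)%:E)%E.
  by apply: integral_ge0 => s _; rewrite lee_fin.
have Gge0 : (0 <= \int[rho]_s (g s)%:E)%E.
  by apply: integral_ge0 => s _; rewrite lee_fin.
have Hge0 : (0 <= \int[rho]_s (h s)%:E)%E.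
  by apply: integral_ge0 => s _; rewrite lee_fin.
have Hfin : (\int[rho]_s (h s)%:E <= 2%:E)%E.
  apply: le_trans (_ : (\int[rho]_s (cst 2%:E s) <= 2%:E)%E).
    apply: ge0_le_integral; [exact: measurableT | by move=> s _; rewrite lee_fin |
      exact: mhE | exact: measurable_cst | by move=> s _; rewrite lee_fin].
  rewrite integral_cst //.
  set X := (X in (2%:E * X)%E).
  have -> : X = 1%E by exact: probability_setT.
  by rewrite mule1.
have main : forall t, 0 < t -> (\int[rho]_s (f s)%:E <=
    (K / 2 * t)%:E * \int[rho]_s (g s)%:E + (K / 2 / t)%:E * \int[rho]_s (h s)%:E)%E.
  move=> t t0.
  have K2 : 0 < K / 2 by apply: divr_gt0.
  have c1 : 0 <= K / 2 * t by apply: mulr_ge0; exact: ltW.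
  have c2 : 0 <= K / 2 / t by apply: divr_ge0; exact: ltW.
  apply: (@le_trans _ _ (\int[rho]_s ((K / 2 * t)%:E * (g s)%:E + (K / 2 / t)%:E * (h s)%:E))%E).
    apply: ge0_le_integral; [exact: measurableT | by move=> s _; rewrite lee_fin |
      exact: mfE | |].
    - by apply: emeasurable_funD; apply: emeasurable_funM => //; exact: measurable_cst.
    - move=> s _; rewrite -!EFinM -EFinD lee_fin.
      apply: le_trans (ptw s t t0) _.
      rewrite le_eqVlt; apply/orP; left; apply/eqP.
      by field; rewrite gt_eqF.
  rewrite ge0_integralD //.
  - rewrite ge0_integralZl_EFin //; last by move=> s _; rewrite lee_fin.
    rewrite ge0_integralZl_EFin //; by move=> s _; rewrite lee_fin.
  - by move=> s _; rewrite -EFinM lee_fin; apply: mulr_ge0.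
  - apply: emeasurable_funM => //; exact: measurable_cst.
  - by move=> s _; rewrite -EFinM lee_fin; apply: mulr_ge0.
  - apply: emeasurable_funM => //; exact: measurable_cst.
have RHS0 : (0 <= K%:E * sqrte (\int[rho]_s (g s)%:E * \int[rho]_s (h s)%:E))%E.
  by apply: mule_ge0; [rewrite lee_fin; exact: ltW| exact: sqrte_ge0].
move: Hge0; rewrite le_eqVlt => /orP[/eqP H0|Hpos].
  apply: le_trans RHS0.
  have ae0 : ae_eq rho setT (fun s => (h s)%:E) (cst 0%E).
    apply/(ae_eq_integral_abs rho measurableT mhE).1.
    rewrite H0; apply: eq_integral => s _.
    by rewrite gee0_abs // lee_fin.
  apply: (@le_trans _ _ (\int[rho]_s (cst 0%E s))%E); last by rewrite integral0.
  apply: ae_ge0_le_integral; [exact: measurableT | by move=> s _; rewrite lee_fin |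
    exact: mfE | by [] | exact: measurable_cst | ].
  apply: filterS ae0 => s /= hs Ts.
  have hs0 : h s = 0 by move: (hs Ts) => [].
  rewrite lee_fin.
  have := @amgm_opt R (f s) (g s) 0 K (g0 s) (lexx 0) Kpos.
  rewrite mulr0 sqrtr0 mulr0; apply => t t0.
  by have := ptw s t t0; rewrite hs0.
move: main Fge0 Gge0 Hpos Hfin.
case: (\int[rho]_s (h s)%:E)%E => [h'| |] main Fge0 Gge0 Hpos Hfin; last first.
- by rewrite ltNge leNye in Hpos.
- by rewrite leye_eq in Hfin.
move: main Gge0.
case: (\int[rho]_s (g s)%:E)%E => [g'| |] main Gge0; last first.
- by rewrite leNgt ltNyr in Gge0.
- rewrite gt0_mulye // /= gt0_muley ?lte_fin //; exact: leey.
move: main Fge0.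
case: (\int[rho]_s (f s)%:E)%E => [f'| |] main Fge0; last first.
- by rewrite leNgt ltNyr in Fge0.
- by have := main 1 ltr01; rewrite -!EFinM -EFinD leye_eq.
rewrite -EFinM lee_fin.
rewrite lee_fin in Gge0; rewrite lte_fin in Hpos.
apply: amgm_opt => //; first exact: ltW.
move=> t t0; have := main t t0; rewrite -!EFinM -EFinD lee_fin => /le_trans; apply.
rewrite le_eqVlt; apply/orP; left; apply/eqP.
by field; rewrite gt_eqF.
Qed.
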